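(* Let $p$ be an odd prime and $G$ a finite $p$-group. Then $G$ is a $2$-closed group if and only if $G$ is cyclic.
   Context: Permutations act on the right. For $X\leq{\rm Sym}(\Omega)$, the $2$-closure of $X$ on $\Omega$ is $X^{(2),\Omega}=\{\theta\in{\rm Sym}(\Omega)\mid \forall \alpha,\beta\in\Omega\ \exists g\in X:\ \alpha^\theta=\alpha^g,\ \beta^\theta=\beta^g\}$. An abstract group $G$ is called a $2$-closed group if $H=H^{(2),\Omega}$ for every set $\Omega$ and every subgroup $H\leq{\rm Sym}(\Omega)$ with $H\cong G$. *)

(* Defs.v *)
From mathcomp Require Import all_boot all_fingroup all_solvable.
Set Implicit Arguments. Unset Strict Implicit. Unset Printing Implicit Defensive.
Import GroupScope.
Local Open Scope group_scope.

(* Permutations of a finite type act on the right: x^s is (s x), and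
   (s * t) x = t (s x) in mathcomp. *)
Definition two_closure (Omega : finType) (X : {set {perm Omega}})
  : {set {perm Omega}} :=
  [set th : {perm Omega} | [forall a : Omega, forall b : Omega,
      [exists g in X, (th a == g a) && (th b == g b)]]].

Definition two_closed (gT : finGroupType) (G : {set gT}) : Prop :=
  forall (Omega : finType) (H : {group {perm Omega}}),
    H \isog G -> two_closure H = H.

(* Main.v *)
Require Import Defs.
From mathcomp Require Import all_boot all_fingroup all_solvable.
Set Implicit Arguments. Unset Strict Implicit. Unset Printing Implicit Defensive.
Import GroupScope.
Local Open Scope group_scope.

Lemma closure_sub (Omega : finType) (H : {group {perm Omega}}) :
  H \subset two_closure H.
Proof.
apply/subsetP=> th Hth; rewrite inE; apply/forallP=> a; apply/forallP=> b.
by apply/existsP; exists th; rewrite Hth !eqxx.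
Qed.

Lemma cyclic_pgroup_closed (Omega : finType) (H : {group {perm Omega}}) p :
  prime p -> p.-group H -> cyclic H -> two_closure H = H.
Proof.
move=> pr_p pH cycH; apply/eqP; rewrite eqEsubset closure_sub andbT.
apply/subsetP=> th; rewrite inE => /forallP cl.
have clab a b : exists2 g, g \in H & th a = g a /\ th b = g b.
  have /forallP/(_ b)/existsP[g /andP[Hg /andP[/eqP e1 /eqP e2]]] := cl a.
  by exists g.
have [trH | ntH] := eqsVneq H 1.
  have -> : th = 1.
    apply/permP=> a; have [g Hg [e1 _]] := clab a a.
    by move: Hg; rewrite trH => /set1P gE; rewrite e1 gE !perm1.
  exact: group1.
have /existsP[a0 /eqP Ca0] : [exists a0, 'C_H[a0 | 'P] == 1].
  apply: contraT; rewrite negb_exists => /forallP allnt.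
  have [_ pdvd _] := pgroup_pdiv pH ntH.
  have [x Hx ox] := Cauchy pr_p pdvd.
  suff x1 : x = 1 by move: ox; rewrite x1 order1 => p1; rewrite -p1 in pr_p.
  apply/permP=> a; rewrite perm1.
  have nt : 'C_H[a | 'P] != 1 := allnt a.
  have pS : p.-group 'C_H[a | 'P] := pgroupS (subsetIl _ _) pH.
  have [_ pdS _] := pgroup_pdiv pS nt.
  have [y Sy oy] := Cauchy pr_p pdS.
  have sYH : <[y]> \subset H by rewrite cycle_subG; case/setIP: Sy.
  have sXH : <[x]> \subset H by rewrite cycle_subG.
  have /eqP eqXY : <[x]> :==: <[y]>.
    by rewrite (eq_subG_cyclic cycH sXH sYH) -!orderE ox oy.
  have : x \in 'C_H[a | 'P].
    by rewrite (subsetP _ x (cycle_id x)) // eqXY cycle_subG.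
  by case/setIP=> _ /astab1P.
have [g0 Hg0 [e0 _]] := clab a0 a0.
suff -> : th = g0 by [].
apply/permP=> b; have [g Hg [e1 e2]] := clab a0 b.
suff eg : g = g0 by rewrite e2 eg.
suff: g * g0^-1 \in 'C_H[a0 | 'P].
  by rewrite Ca0 => /set1P /eqP; rewrite -eq_mulgV1 => /eqP.
rewrite inE groupM ?groupV //=; apply/astab1P.
by rewrite /= /aperm permM -e1 e0 -permM mulgV perm1.
Qed.

Lemma rcosets_mulr (gT : finGroupType) (K G : {group gT}) (A : {set gT}) (g : gT) :
  g \in G -> (A :* g \in rcosets K G) = (A \in rcosets K G).
Proof.
move=> Gg; apply/rcosetsP/rcosetsP => [[x Gx eA]|[x Gx ->]].
  exists (x * g^-1); first by rewrite groupM ?groupV.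
  by rewrite rcosetM -eA -rcosetM mulgV rcoset1.
by exists (x * g); rewrite ?groupM // rcosetM.
Qed.

Lemma self_rcosets (gT : finGroupType) (K G : {group gT}) :
  (K : {set gT}) \in rcosets K G.
Proof. by apply/rcosetsP; exists 1; rewrite ?group1 ?rcoset1. Qed.

Lemma notin_rcosets (gT : finGroupType) (K N G : {group gT}) :
  ~~ (K \subset N) -> (K : {set gT}) \notin rcosets N G.
Proof.
move=> nKN; apply/rcosetsP => [[x Gx eK]].
have : 1 \in N :* x.
  by rewrite -eK; exact: group1.
rewrite mem_rcoset.
rewrite mul1g.
rewrite groupV.
move=> Nx.
by move: nKN; rewrite eK rcoset_id ?subxx.
Qed.

Lemma rcoset_fix (gT : finGroupType) (K : {group gT}) (x : gT) :
  K :* x = K -> x \in K.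
Proof. by move=> e; rewrite -e rcoset_refl. Qed.

Lemma rcoset_shift (gT : finGroupType) (N G : {group gT}) (w n : gT) :
  N <| G -> w \in G -> n \in N -> N :* w :* n = N :* w.
Proof.
move=> /andP[_ nNG] Gw Nn.
rewrite -rcosetM conjgCV rcosetM (@rcoset_id _ N (n ^ w^-1)) //.
by rewrite memJ_norm // groupV (subsetP nNG).
Qed.

Lemma rcoset_conj (gT : finGroupType) (C : {group gT}) (y k : gT) :
  k \in C :^ y -> C :* y :* k = C :* y.
Proof.
rewrite mem_conjg => Ck; rewrite -rcosetM conjgCV rcosetM.
by rewrite (@rcoset_id _ C (k ^ y^-1)).
Qed.

Lemma key_prod (gT : finGroupType) (G E N K : {group gT}) p (y : gT) :
  prime p -> #|K| = p -> #|N| = p -> #|E| = (p ^ 2)%N -> K \subset E ->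
  N \subset E -> N <| G -> E <| G -> ~~ (K \subset N) -> y \in G ->
  N * (K :^ y) = E.
Proof.
move=> pr oK oN oE sKE sNE nNG nEG nKN Gy.
have sKyE : K :^ y \subset E.
  by rewrite -(normsP (normal_norm nEG) y Gy) conjSg.
have nKyN : ~~ (K :^ y \subset N).
  by rewrite sub_conjg (normsP (normal_norm nNG) _ (groupVr Gy)).
have TI : K :^ y :&: N = 1 by apply: prime_TIg; rewrite // cardJg oK.
apply/eqP; rewrite eqEcard mul_subG //= TI_cardMg; last by rewrite setIC.
by rewrite oE cardJg oK oN expnS expn1.
Qed.

Definition Om (gT : finGroupType) (S0 : {set {set gT}}) :=
  {A : {set gT} | A \in S0}.

Lemma not_closed_of (gT : finGroupType) (G E N K K2 : {group gT}) p (u : gT) :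
  prime p -> E <| G -> N <| G -> N \subset E -> K \subset E -> K2 \subset E ->
  #|E| = (p ^ 2)%N -> #|N| = p -> #|K| = p -> #|K2| = p ->
  ~~ (K \subset N) -> ~~ (K2 \subset N) -> K :&: K2 = 1 ->
  u \in E -> u \notin N -> ~ two_closed G.
Proof.
move=> pr nEG nNG sNE sKE sK2E oE oN oK oK2 nKN nK2N tiK Eu nNu closed.
have sEG := normal_sub nEG.
have Gu : u \in G := subsetP sEG u Eu.
pose S0 := rcosets K G :|: rcosets K2 G :|: rcosets N G.
pose to := ('Rs^?)%act : action _ (Om S0).
have sGD : G \subset 'N([set x | x \in S0] | 'Rs).
  apply/subsetP=> g Gg; apply/astabsP => A; rewrite !inE /= rcosetE.
  by rewrite !rcosets_mulr.
have valto (A : Om S0) g : g \in G -> val (to A g) = val A :* g.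
  move=> Gg; rewrite val_subact; case: ifP => [_|/negP[]]; first by rewrite /= rcosetE.
  exact: (subsetP sGD).
pose H := (actperm to @* G)%G.
have sGD' : G \subset 'dom (actperm to) := sGD.
have SK : (K : {set gT}) \in S0 by rewrite !inE self_rcosets.
have SK2 : (K2 : {set gT}) \in S0 by rewrite !inE self_rcosets ?orbT.
have SN : (N : {set gT}) \in S0 by rewrite !inE self_rcosets ?orbT.
pose pK : Om S0 := Sub (K : {set gT}) SK.
pose pK2 : Om S0 := Sub (K2 : {set gT}) SK2.
pose pN : Om S0 := Sub (N : {set gT}) SN.
have fixC (C : {group gT}) (pC : Om S0) x : x \in G -> val pC = C ->
    to pC x = pC -> x \in C.
  move=> Gx vC /(congr1 val); rewrite valto // vC; exact: rcoset_fix.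
have injR : 'injm (restrm sGD' (actperm to)).
  rewrite ker_restrm ker_actperm; apply/subsetP=> x /setIP[Gx cx].
  have fx (pC : Om S0) : to pC x = pC := astab_act cx (in_setT pC).
  have Kx : x \in K by apply: (fixC K pK x Gx).
  have K2x : x \in K2 by apply: (fixC K2 pK2 x Gx).
  by rewrite -tiK inE Kx K2x.
have isoH : H \isog G.
  have := sub_isog (subxx G) injR; rewrite morphim_restrm setIid.
  by rewrite isog_sym.
pose f (A : Om S0) := if val A \in rcosets N G then to A u else A.
have finj : injective f.
  move=> A B; rewrite /f; case: ifP => NA; case: ifP => NB.
  - exact: act_inj.
  - move=> e; move: NB; rewrite -e valto // rcosets_mulr // NA //.
  - move=> e; move: NA; rewrite e valto // rcosets_mulr // NB //.
  - by [].
pose th := perm finj.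
have mixed (a b : Om S0) : val a \in rcosets N G -> val b \notin rcosets N G ->
    exists2 x, x \in G & to a x = to a u /\ to b x = b.
  move=> Na Nb; have := valP b; rewrite !inE (negbTE Nb) orbF => Kb.
  have [C [oC sCE nCN Cb]] : exists C : {group gT},
      [/\ #|C| = p, C \subset E, ~~ (C \subset N) & val b \in rcosets C G].
    by case/orP: Kb => ?; [exists K | exists K2].
  case/rcosetsP: Cb => y Gy eb; case/rcosetsP: Na => w Gw ea.
  have eE := key_prod pr oC oN oE sCE sNE nNG nEG nCN Gy.
  have : u \in N * (C :^ y) by rewrite eE.
  case/mulsgP => n k Nn Cyk eu.
  have Ek : k \in E by rewrite -eE; apply/mulsgP; exists 1 k; rewrite ?group1 ?mul1g.
  have Gk : k \in G := subsetP sEG k Ek.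
  exists k => //; split; apply: val_inj; rewrite !valto //.
    by rewrite ea eu rcosetM (rcoset_shift nNG Gw Nn).
  by rewrite eb (rcoset_conj Cyk).
have thH : th \in H.
  rewrite -(closed _ H isoH) inE; apply/forallP=> a; apply/forallP=> b.
  apply/existsP.
  case Na: (val a \in rcosets N G); case Nb: (val b \in rcosets N G).
  - exists (actperm to u); rewrite mem_morphim ?(subsetP sGD') //=.
    by rewrite !permE /f Na Nb ?actpermE !eqxx.
  - have [x Gx [e1 e2]] := mixed a b Na (negbT Nb).
    exists (actperm to x); rewrite mem_morphim ?(subsetP sGD') //=.
    by rewrite !permE /f Na Nb ?actpermE e1 e2 !eqxx.
  - have [x Gx [e1 e2]] := mixed b a Nb (negbT Na).
    exists (actperm to x); rewrite mem_morphim ?(subsetP sGD') //=.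
    by rewrite !permE /f Na Nb ?actpermE e1 e2 !eqxx.
  - by exists 1; rewrite group1 !permE /f Na Nb ?perm1 !eqxx.
case/morphimP: thH => x Dx Gx eth.
have thfix (pC : Om S0) (C : {group gT}) : val pC = C -> ~~ (C \subset N) ->
    x \in C.
  move=> vC nC; apply: (fixC C pC x Gx vC).
  by rewrite -actpermE -eth permE /f vC (negbTE (notin_rcosets G nC)).
have x1 : x = 1.
  have : x \in K :&: K2 by rewrite inE (thfix pK K) // (thfix pK2 K2).
  by rewrite tiK => /set1P.
have := congr1 (fun s : {perm Om S0} => val (s pN)) eth.
rewrite /= permE /f /= self_rcosets actpermE x1 act1 valto //.
by move/rcoset_fix; apply/negP.
Qed.

Theorem mainTheorem12 (gT : finGroupType) (G : {group gT}) (p : nat) :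
  prime p -> odd p -> (p.-group G)%g -> (two_closed G <-> cyclic G).
Proof.
move=> pr odd_p pG; split; last first.
  move=> cG Omega H iso; apply: (cyclic_pgroup_closed pr).
    by rewrite /pgroup (card_isog iso).
  by rewrite (isog_cyclic iso).
move=> closed.
have hX : forall X : {group gT}, X <| G -> abelian X -> cyclic X.
  move=> X nXG cXX; apply: contraT => ncX; exfalso.
  have sXG := normal_sub nXG; have pX := pgroupS sXG pG.
  have r2 : 1 < 'r(X) by rewrite ltnNge -abelian_rank1_cyclic.
  rewrite (rank_pgroup pX) (p_rank_abelian p cXX) in r2.
  have nOG : 'Ohm_1(X) <| G := char_normal_trans (Ohm_char 1 X) nXG.
  have [E [sEO nEG oE]] := normal_pgroup pG nOG r2.
  have abE : p.-abelem E := abelemS sEO (Ohm1_abelem pX cXX).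
  have sEG := normal_sub nEG.
  have lE : 1 <= logn p #|E| by rewrite oE pfactorK.
  have [N [sNE nNG oN]] := normal_pgroup pG nEG lE.
  rewrite expn1 in oN.
  have /subsetPn [a Ea nNa] : ~~ (E \subset N).
    apply/negP => sEN; have := subset_leq_card sEN.
    by rewrite oE oN (expnS p 1) expn1 leqNgt ltn_Pmull ?prime_gt1 ?prime_gt0.
  have ntN : N :!=: 1 by rewrite -cardG_gt1 oN prime_gt1.
  have [z Nz nz1] := trivgPn _ ntN.
  have Ez := subsetP sNE z Nz.
  have a1 : a != 1 by apply: contraNneq nNa => ->; exact: group1.
  have az1 : a * z \notin N by rewrite groupMr.
  have oa : #[a] = p := abelem_order_p abE Ea a1.
  have az1' : a * z != 1 by apply: contraNneq az1 => ->; exact: group1.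
  have oaz : #[a * z] = p := abelem_order_p abE (groupM Ea Ez) az1'.
  have nsN : ~~ (<[a]> \subset N) by rewrite cycle_subG.
  have tiN : <[a]> :&: N = 1 by apply: prime_TIg; rewrite // -orderE oa.
  have nsub : ~~ (<[a]> \subset <[a * z]>).
    apply/negP => sub.
    have /eqP eq : <[a]> == <[a * z]>.
      by rewrite eqEcard sub /= -!orderE oa oaz.
    have : a * z \in <[a]> by rewrite eq cycle_id.
    rewrite groupMl ?cycle_id // => za.
    have : z \in <[a]> :&: N by rewrite inE za Nz.
    by rewrite tiN => /set1P; apply/eqP.
  apply: (not_closed_of (K := <[a]>%G) (K2 := <[a * z]>%G) (u := a) pr nEG nNG sNE)
    => //=.
  - by rewrite cycle_subG.
  - by rewrite cycle_subG groupM.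
  - by rewrite cycle_subG.
  - by apply: prime_TIg; rewrite // -orderE oa.
have [//|] := normal_rank1_structure pG hX.
by case/and3P=> /eqP p2; rewrite p2 in odd_p.
Qed.
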